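(* Let $E$ be a regular biordered set satisfying: (E1) there exists $0\in E$ with $0\,\omega\,e$ for every $e\in E$; (E2) there is a map $e\mapsto e'$ on $E$ such that for all $e,f\in E$: (i) $(e')'=e$; (ii) $f\,\omega^l\,e$ iff $e'\,\omega^r\,f'$; (iii) $f\,\omega^l\,e'$ iff $M(f,e)=\{0\}$. Then for each $e\in E$, the elements $\mathcal L(e)$ and $\mathcal L(e')$ are complements of each other in the lattice $L(E)=E/\mathcal L$.
   Context: A regular biordered set is a partial algebra isomorphic to the set of idempotents $E(S)$ of a regular semigroup $S$ (regular: every $x$ has $y$ with $xyx=x$), where $ef$ (computed in $S$) is defined when $\{ef,fe\}\cap\{e,f\}\ne\emptyset$. In $E$: $\omega^l=\{(e,f): ef=e\}$, $\omega^r=\{(e,f): fe=e\}$, $\omega=\omega^l\cap\omega^r$, $M(e,f)=\{g\in E: g\,\omega^l\,e,\ g\,\omega^r\,f\}$. $\mathcal L=\omega^l\cap(\omega^l)^{-1}$ with classes $\mathcal L(e)$; $E/\mathcal L$ is ordered by $\mathcal L(e)\le\mathcal L(f)$ iff $e\,\omega^l\,f$, and under (E1),(E2) it is a lattice with least element $\mathcal L(0)$ and greatest element $\mathcal L(1)$, where $1=0'$. Two elements $a,b$ are complements if $a\wedge b$ is the least element and $a\vee b$ the greatest element. *)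

(* Defs.v *)
(* A regular biordered set is (up to isomorphism) the set E(S) of idempotents
   of a regular semigroup S, with the partial product inherited from S. *)

Definition associative_op {S : Type} (mul : S -> S -> S) : Prop :=
  forall x y z, mul x (mul y z) = mul (mul x y) z.

Definition regular_semigroup {S : Type} (mul : S -> S -> S) : Prop :=
  associative_op mul /\ forall x, exists y, mul (mul x y) x = x.

Definition idem {S : Type} (mul : S -> S -> S) (e : S) : Prop := mul e e = e.

Definition omega_l {S : Type} (mul : S -> S -> S) (e f : S) : Prop := mul e f = e.
Definition omega_r {S : Type} (mul : S -> S -> S) (e f : S) : Prop := mul f e = e.
Definition omega {S : Type} (mul : S -> S -> S) (e f : S) : Prop :=
  omega_l mul e f /\ omega_r mul e f.

Definition Mset {S : Type} (mul : S -> S -> S) (e f : S) (g : S) : Prop :=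
  idem mul g /\ omega_l mul g e /\ omega_r mul g f.

(* The lattice E/L is the quotient of the preorder omega^l on E; we describe
   its order-theoretic notions on representatives (L-classes of idempotents). *)
Definition is_meet {S : Type} (mul : S -> S -> S) (a b m : S) : Prop :=
  idem mul m /\ omega_l mul m a /\ omega_l mul m b /\
  forall g, idem mul g -> omega_l mul g a -> omega_l mul g b -> omega_l mul g m.

Definition is_join {S : Type} (mul : S -> S -> S) (a b j : S) : Prop :=
  idem mul j /\ omega_l mul a j /\ omega_l mul b j /\
  forall g, idem mul g -> omega_l mul a g -> omega_l mul b g -> omega_l mul j g.

Definition is_least {S : Type} (mul : S -> S -> S) (m : S) : Prop :=
  forall g, idem mul g -> omega_l mul m g.

Definition is_greatest {S : Type} (mul : S -> S -> S) (j : S) : Prop :=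
  forall g, idem mul g -> omega_l mul g j.

Definition L_complements {S : Type} (mul : S -> S -> S) (a b : S) : Prop :=
  (exists m, is_meet mul a b m /\ is_least mul m) /\
  (exists j, is_join mul a b j /\ is_greatest mul j).

(* Main.v *)
Require Import Defs.

Theorem corollary3p5 (S : Type) (mul : S -> S -> S)
  (Hreg : regular_semigroup mul)
  (zero : S) (Hzero : idem mul zero)
  (E1 : forall e, idem mul e -> omega mul zero e)
  (c : S -> S) (Hc : forall e, idem mul e -> idem mul (c e))
  (E2i : forall e, idem mul e -> c (c e) = e)
  (E2ii : forall e f, idem mul e -> idem mul f ->
            (omega_l mul f e <-> omega_r mul (c e) (c f)))
  (E2iii : forall e f, idem mul e -> idem mul f ->
            (omega_l mul f (c e) <-> (forall g, Mset mul f e g <-> g = zero)))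
  (e : S) (He : idem mul e) :
  L_complements mul e (c e).
Proof.
  destruct Hreg as [A _]. unfold associative_op in A.
  unfold idem, omega, omega_l, omega_r, Mset in *.
  split.
  - exists zero. split.
    + repeat split; auto; unfold idem, omega_l, omega_r in *.
      * apply E1; auto.
      * apply E1; auto.
      * intros g Hg Hge Hgc.
        assert (Heg : mul e g = zero).
        { apply (proj1 (E2iii e g He Hg) Hgc). unfold idem, omega_l, omega_r in *.
          repeat split.
          - rewrite <- A. rewrite (A g e g). rewrite Hge, Hg. reflexivity.
          - rewrite <- A. rewrite Hg. reflexivity.
          - rewrite A. rewrite He. reflexivity. }
        rewrite <- Heg. rewrite A. rewrite Hge. exact Hg.
    + intros g Hg. apply E1; auto.
  - assert (Hgr : forall g, mul g g = g -> mul g (c zero) = g).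
    { intros g Hg. apply (proj2 (E2ii (c zero) g (Hc zero Hzero) Hg)).
      unfold omega_r. rewrite E2i by auto.
      apply E1; auto. }
    exists (c zero). split.
    + unfold is_join, idem, omega_l, omega_r in *.
      split; [apply Hc; auto|split; [apply Hgr; auto|split; [apply Hgr; apply Hc; auto|]]].
      intros g Hg Heg Hcg.
      apply (proj2 (E2ii g (c zero) Hg (Hc zero Hzero))).
      unfold omega_r. rewrite E2i by auto.
      pose proof (proj1 (E2ii g e Hg He) Heg) as H1.
      pose proof (proj1 (E2ii g (c e) Hg (Hc e He)) Hcg) as H2.
      unfold omega_r in H1, H2. rewrite E2i in H2 by auto.
      set (h := c g) in *.
      assert (Hh : mul h h = h) by (apply Hc; auto).
      assert (Hhe : mul h e = zero).
      { assert (Hee : mul (mul h e) e = mul h e) by (rewrite <- A, He; reflexivity).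
        assert (Hhi : mul (mul h e) (mul h e) = mul h e)
          by (rewrite <- A, (A e h e), H2, A, Hh; reflexivity).
        apply (proj1 (E2iii (c e) (mul h e) (Hc e He) Hhi)).
        - rewrite E2i by auto. exact Hee.
        - repeat split; auto.
          rewrite A, H1. reflexivity. }
      assert (Hz : h = zero).
      { transitivity (mul h (mul e h)); [rewrite H2; symmetry; exact Hh|]. rewrite A, Hhe.
        apply E1; auto. }
      rewrite Hz. exact Hzero.
    + intros g Hg. apply Hgr; auto.
Qed.
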